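(* Let $\rho=\sum_j p_j|e_j\rangle\langle e_j|$ be a full-rank density matrix on $\mathbb{C}^D$ (all $p_j>0$, orthonormal eigenvectors $|e_j\rangle$) with Hermitian derivatives $\rho_1=\partial_1\rho$, $\rho_2=\partial_2\rho$. Let $u\in[0,1]$, $\mathbf z\in\mathbb R^6$, $\mathbf b=(0,1,0,0,0,1)^\top$, $A=\tfrac12(z_1\rho+z_2\rho_1+z_3\rho_2-iz_4\rho-iz_5\rho_1-iz_6\rho_2)$, and $$\mathsf L(Y,u,\mathbf z)=-\mathbf b^\top\mathbf z+u\,\mathrm{Tr}[Y\rho Y^\dagger]+(1-u)\,\mathrm{Tr}[Y^\dagger\rho Y]+\mathrm{Tr}[AY]+\mathrm{Tr}[A^\dagger Y^\dagger]$$ for complex $D\times D$ matrices $Y$. Then the $Y$ minimising $\mathsf L(\cdot,u,\mathbf z)$ is $$Y=-\sum_{j,k}(u\,p_k+(1-u)\,p_j)^{-1}\langle e_j|A^\dagger|e_k\rangle\,|e_j\rangle\langle e_k|.$$ *)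

(* Defs.v *)
(* Complex numbers: an arbitrary numeric closed field C
   (e.g. complex R for R : realType, or algC); conjugation is z^*. *)
From HB Require Import structures.
From mathcomp Require Import all_boot all_order all_algebra.
Set Implicit Arguments. Unset Strict Implicit. Unset Printing Implicit Defensive.
Import Order.TTheory GRing.Theory Num.Theory.
Local Open Scope ring_scope.

Section Defs.
Variables (C : numClosedFieldType) (D : nat).

Definition adjmx (m n : nat) (A : 'M[C]_(m, n)) : 'M[C]_(n, m) :=
  (map_mx (fun x => x^*) A)^T.

Definition is_hermitian (A : 'M[C]_D) : Prop := adjmx A = A.

Definition ketbra (x y : 'cV[C]_D) : 'M[C]_D := x *m adjmx y.

Definition braket (x : 'cV[C]_D) (M : 'M[C]_D) (y : 'cV[C]_D) : C :=
  (adjmx x *m M *m y) 0 0.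

Definition orthonormal (e : 'I_D -> 'cV[C]_D) : Prop :=
  forall j k, (adjmx (e j) *m e k) 0 0 = (j == k)%:R.

Definition full_rank_density (rho : 'M[C]_D) (p : 'I_D -> C)
  (e : 'I_D -> 'cV[C]_D) : Prop :=
  [/\ forall j, 0 < p j, \sum_j p j = 1, orthonormal e &
      rho = \sum_j p j *: ketbra (e j) (e j)].

(* A = 1/2 (z1 rho + z2 rho1 + z3 rho2 - i z4 rho - i z5 rho1 - i z6 rho2),
   z indexed 0..5 *)
Definition Amat (rho rho1 rho2 : 'M[C]_D) (z : 'I_6 -> C) : 'M[C]_D :=
  2^-1 *: (z 0 *: rho + z 1 *: rho1 + z 2 *: rho2
           - 'i * z 3 *: rho - 'i * z 4 *: rho1 - 'i * z 5 *: rho2).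

Definition bvec : 'I_6 -> C := fun i => if (i == 1 :> nat) || (i == 5 :> nat) then 1 else 0.

Definition Lfun (rho rho1 rho2 : 'M[C]_D) (Y : 'M[C]_D) (u : C) (z : 'I_6 -> C) : C :=
  let A := Amat rho rho1 rho2 z in
  - (\sum_i bvec i * z i)
  + u * \tr (Y *m rho *m adjmx Y) + (1 - u) * \tr (adjmx Y *m rho *m Y)
  + \tr (A *m Y) + \tr (adjmx A *m adjmx Y).

Definition Ystar (rho rho1 rho2 : 'M[C]_D) (p : 'I_D -> C)
  (e : 'I_D -> 'cV[C]_D) (u : C) (z : 'I_6 -> C) : 'M[C]_D :=
  - \sum_j \sum_k ((u * p k + (1 - u) * p j)^-1
        * braket (e j) (adjmx (Amat rho rho1 rho2 z)) (e k))
        *: ketbra (e j) (e k).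

End Defs.

(* Main.v *)
Require Import Defs.
From HB Require Import structures.
From mathcomp Require Import all_boot all_order all_algebra.
From mathcomp Require Import ring.
Import Order.TTheory GRing.Theory Num.Theory.
Local Open Scope ring_scope.
Set Implicit Arguments. Unset Strict Implicit.

Lemma adjmxD (C : numClosedFieldType) m n (A B : 'M[C]_(m,n)) :
  adjmx (A + B) = adjmx A + adjmx B.
Proof. by apply/matrixP=> i j; rewrite /adjmx !mxE rmorphD. Qed.
Lemma adjmxN (C : numClosedFieldType) m n (A : 'M[C]_(m,n)) :
  adjmx (- A) = - adjmx A.
Proof. by apply/matrixP=> i j; rewrite /adjmx !mxE rmorphN. Qed.
Lemma adjmxB (C : numClosedFieldType) m n (A B : 'M[C]_(m,n)) :
  adjmx (A - B) = adjmx A - adjmx B.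
Proof. by rewrite adjmxD adjmxN. Qed.
Lemma adjmxM (C : numClosedFieldType) m n k (A : 'M[C]_(m,n)) (B : 'M[C]_(n,k)) :
  adjmx (A *m B) = adjmx B *m adjmx A.
Proof. by rewrite /adjmx map_mxM trmx_mul. Qed.
Lemma adjmxK (C : numClosedFieldType) m n (A : 'M[C]_(m,n)) :
  adjmx (adjmx A) = A.
Proof. by apply/matrixP=> i j; rewrite /adjmx !mxE conjCK. Qed.
Lemma adjmxZ (C : numClosedFieldType) m n (a : C) (A : 'M[C]_(m,n)) :
  adjmx (a *: A) = a^* *: adjmx A.
Proof. by apply/matrixP=> i j; rewrite /adjmx !mxE rmorphM. Qed.
Lemma adjmx0 (C : numClosedFieldType) m n : adjmx (0 : 'M[C]_(m,n)) = 0.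
Proof. by apply/matrixP=> i j; rewrite /adjmx !mxE conjC0. Qed.
Lemma adjmx_sum (C : numClosedFieldType) m n (I : finType) (F : I -> 'M[C]_(m,n)) :
  adjmx (\sum_i F i) = \sum_i adjmx (F i).
Proof. exact: (big_morph _ (@adjmxD C m n) (@adjmx0 C m n)). Qed.

Lemma complete (C : numClosedFieldType) D (e : 'I_D -> 'cV[C]_D) :
  Defs.orthonormal e -> \sum_j ketbra (e j) (e j) = 1%:M.
Proof.
move=> on.
pose U : 'M[C]_D := \matrix_(i, j) e j i 0.
have h1 : adjmx U *m U = 1%:M.
  apply/matrixP=> j k; rewrite !mxE -on !mxE.
  by apply: eq_bigr => i _; rewrite !mxE.
have h2 := mulmx1C h1.
apply/matrixP=> a b; rewrite -h2 summxE !mxE.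
apply: eq_bigr => j _; rewrite !mxE big_ord1 !mxE.
done.
Qed.
Lemma mulmx11 (C : numClosedFieldType) n (x : 'cV[C]_n) (M : 'M[C]_1) :
  x *m M = M 0 0 *: x.
Proof. by rewrite {1}(mx11_scalar M) mul_mx_scalar. Qed.

Lemma kb_mul (C : numClosedFieldType) D (e : 'I_D -> 'cV[C]_D) j k l m :
  Defs.orthonormal e ->
  ketbra (e j) (e k) *m ketbra (e l) (e m) = (k == l)%:R *: ketbra (e j) (e m).
Proof.
move=> on; rewrite /ketbra mulmxA -(mulmxA (e j)) mulmx11 on.
by rewrite scalemxAl.
Qed.

Lemma sum_delta (C : numClosedFieldType) D (V : lmodType C) (k : 'I_D) (f : 'I_D -> C) (X : 'I_D -> V) :
  \sum_l (f l * (k == l)%:R) *: X l = f k *: X k.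
Proof.
rewrite (bigD1 k) //= eqxx mulr1 big1 ?addr0 // => l /negbTE; rewrite eq_sym => ->.
by rewrite mulr0 scale0r.
Qed.

Lemma sum_delta' (C : numClosedFieldType) D (V : lmodType C) (k : 'I_D) (f : 'I_D -> C) (X : 'I_D -> V) :
  \sum_l (f l * (l == k)%:R) *: X l = f k *: X k.
Proof.
rewrite -(@sum_delta C D V k f X); apply: eq_bigr => l _; by rewrite eq_sym.
Qed.

Lemma expand (C : numClosedFieldType) D (e : 'I_D -> 'cV[C]_D) (B : 'M[C]_D) :
  Defs.orthonormal e ->
  \sum_j \sum_k braket (e j) B (e k) *: ketbra (e j) (e k) = B.
Proof.
move=> on.
apply: esym; rewrite {1}(_ : B = (\sum_j ketbra (e j) (e j)) *m B *m (\sum_k ketbra (e k) (e k))); last first.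
  by rewrite complete // mul1mx mulmx1.
rewrite mulmx_suml mulmx_suml; apply: eq_bigr => j _.
rewrite mulmx_sumr; apply: eq_bigr => k _.
rewrite /ketbra /braket.
rewrite !mulmxA -(mulmxA (e j)) -(mulmxA (e j)) mulmx11 scalemxAl.
by [].
Qed.

Lemma prodL (C : numClosedFieldType) D (p : 'I_D -> C) (e : 'I_D -> 'cV[C]_D) j (a : 'I_D -> C) :
  Defs.orthonormal e ->
  (\sum_k a k *: ketbra (e j) (e k)) *m (\sum_l p l *: ketbra (e l) (e l))
  = \sum_k (a k * p k) *: ketbra (e j) (e k).
Proof.
move=> on; rewrite mulmx_suml; apply: eq_bigr => k _.
rewrite mulmx_sumr.
under eq_bigr => l _ do rewrite -scalemxAl -scalemxAr kb_mul // scalerA scalerA.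
rewrite (@sum_delta C D _ k (fun l => a k * p l)) /=.
done.
Qed.

Lemma prodR (C : numClosedFieldType) D (p : 'I_D -> C) (e : 'I_D -> 'cV[C]_D) j (a : 'I_D -> C) :
  Defs.orthonormal e ->
  (\sum_l p l *: ketbra (e l) (e l)) *m (\sum_k a k *: ketbra (e j) (e k))
  = \sum_k (p j * a k) *: ketbra (e j) (e k).
Proof.
move=> on; rewrite mulmx_sumr; apply: eq_bigr => k _.
rewrite mulmx_suml.
under eq_bigr => l _ do rewrite -scalemxAl -scalemxAr kb_mul // scalerA scalerA.
rewrite (@sum_delta' C D _ j (fun l => p l * a k)) /=.
done.
Qed.

Lemma keyK (C : numClosedFieldType) D (rho : 'M[C]_D) (p : 'I_D -> C) (e : 'I_D -> 'cV[C]_D) (u : C) (B : 'M[C]_D) :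
  Defs.orthonormal e -> rho = \sum_j p j *: ketbra (e j) (e j) ->
  (forall j k, u * p k + (1 - u) * p j != 0) ->
  u *: ((- \sum_j \sum_k ((u * p k + (1 - u) * p j)^-1 * braket (e j) B (e k)) *: ketbra (e j) (e k)) *m rho)
  + (1 - u) *: (rho *m (- \sum_j \sum_k ((u * p k + (1 - u) * p j)^-1 * braket (e j) B (e k)) *: ketbra (e j) (e k)))
  = - B.
Proof.
move=> on -> nz.
rewrite mulNmx mulmxN -{3}(@expand C D e B on) mulmx_suml mulmx_sumr.
rewrite !scalerN -opprD; congr (- _).
rewrite !scaler_sumr -big_split /=; apply: eq_bigr => j _.
rewrite prodL // prodR // !scaler_sumr -big_split /=; apply: eq_bigr => k _.
rewrite !scalerA -scalerDl; congr (_ *: _).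
have wnz := nz j k.
by field.
Qed.

Definition Qf (C : numClosedFieldType) D (rho A : 'M[C]_D) (u : C) (Y : 'M[C]_D) :=
  u * \tr (Y *m rho *m adjmx Y) + (1 - u) * \tr (adjmx Y *m rho *m Y)
  + \tr (A *m Y) + \tr (adjmx A *m adjmx Y).

Lemma Qexp (C : numClosedFieldType) D (rho A Y0 H : 'M[C]_D) (u : C) :
  adjmx rho = rho -> u^* = u ->
  u *: (Y0 *m rho) + (1 - u) *: (rho *m Y0) = - adjmx A ->
  @Qf C D rho A u (Y0 + H) = @Qf C D rho A u Y0 + (u * \tr (H *m rho *m adjmx H) + (1 - u) * \tr (adjmx H *m rho *m H)).
Proof.
move=> hr hu K.
have K' : u *: (rho *m adjmx Y0) + (1 - u) *: (adjmx Y0 *m rho) = - A.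
  have := congr1 (@adjmx C D D) K.
  rewrite adjmxN adjmxK adjmxD !adjmxZ !adjmxM hr rmorphB rmorph1 hu => <-.
  congr (_ + (1 - _) *: _); first [exact: hu | exact: esym hu].
have ha : u * \tr (H *m rho *m adjmx Y0) + (1 - u) * \tr (adjmx Y0 *m rho *m H) + \tr (A *m H) = 0.
  have := congr1 (fun M => \tr (H *m M)) K'.
  rewrite /= mulmxDr -!scalemxAr mxtraceD !mxtraceZ mulmxN linearN /= => E.
  rewrite -(mulmxA H) (mxtrace_mulC (adjmx Y0 *m rho)) E (mxtrace_mulC A).
  by rewrite addNr.
have hb : u * \tr (Y0 *m rho *m adjmx H) + (1 - u) * \tr (adjmx H *m rho *m Y0) + \tr (adjmx A *m adjmx H) = 0.
  have := congr1 (fun M => \tr (adjmx H *m M)) K.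
  rewrite /= mulmxDr -!scalemxAr mxtraceD !mxtraceZ mulmxN linearN /= => E.
  rewrite (mxtrace_mulC (Y0 *m rho)) -(mulmxA (adjmx H) rho) E (mxtrace_mulC (adjmx A)).
  by rewrite addNr.
rewrite /Qf adjmxD !mulmxDl !mulmxDr !mxtraceD.
move: ha hb.
set t1 := \tr (H *m rho *m adjmx Y0).
set t2 := \tr (adjmx Y0 *m rho *m H).
set t3 := \tr (A *m H).
set t4 := \tr (Y0 *m rho *m adjmx H).
set t5 := \tr (adjmx H *m rho *m Y0).
set t6 := \tr (adjmx A *m adjmx H).
move=> /eqP; rewrite addrC addr_eq0 => /eqP ->.
move=> /eqP; rewrite addrC addr_eq0 => /eqP ->.
ring.
Qed.

Definition nv (C : numClosedFieldType) D (x : 'cV[C]_D) : C := (adjmx x *m x) 0 0.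

Lemma nv_ge0 (C : numClosedFieldType) D (x : 'cV[C]_D) : 0 <= nv x.
Proof.
rewrite /nv !mxE; apply: sumr_ge0 => i _; rewrite /adjmx !mxE mulrC; exact: mul_conjC_ge0.
Qed.

Lemma nv_eq0 (C : numClosedFieldType) D (x : 'cV[C]_D) : nv x = 0 -> x = 0.
Proof.
rewrite /nv !mxE => h; apply/matrixP => i j; rewrite (ord1 j) mxE.
have nn : forall k : 'I_D, true -> 0 <= adjmx x 0 k * x k 0.
  move=> k _; rewrite /adjmx !mxE mulrC; exact: mul_conjC_ge0.
have := @psumr_eq0P _ _ _ _ nn h i isT.
by rewrite /adjmx !mxE mulrC => /eqP; rewrite mul_conjC_eq0 => /eqP.
Qed.

Lemma trQ (C : numClosedFieldType) D (p : 'I_D -> C) (e : 'I_D -> 'cV[C]_D) (H : 'M[C]_D) :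
  \tr (H *m (\sum_j p j *: ketbra (e j) (e j)) *m adjmx H) = \sum_j p j * nv (H *m e j).
Proof.
rewrite mulmx_sumr mulmx_suml linear_sum; apply: eq_bigr => j _ /=.
rewrite -scalemxAr -scalemxAl mxtraceZ; congr (_ * _).
rewrite /ketbra /nv adjmxM !mulmxA -(mulmxA (H *m e j)) mxtrace_mulC !mulmxA /mxtrace big_ord1.
by rewrite !mxE.
Qed.

Lemma kill (C : numClosedFieldType) D (e : 'I_D -> 'cV[C]_D) (H : 'M[C]_D) :
  Defs.orthonormal e -> (forall j, H *m e j = 0) -> H = 0.
Proof.
move=> on h; rewrite -[H]mulmx1 -(@complete C D e on) mulmx_sumr big1 // => j _.
by rewrite /ketbra mulmxA h mul0mx.
Qed.

Lemma sum_kill (C : numClosedFieldType) D (p : 'I_D -> C) (x : 'I_D -> 'cV[C]_D) :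
  (forall j, 0 < p j) -> \sum_j p j * nv (x j) = 0 -> forall j, x j = 0.
Proof.
move=> hp h j; apply: nv_eq0.
have nn : forall k : 'I_D, true -> 0 <= p k * nv (x k).
  by move=> k _; rewrite mulr_ge0 ?nv_ge0 ?ltW.
have := @psumr_eq0P _ _ _ _ nn h j isT.
by move=> /eqP; rewrite mulf_eq0 (gt_eqF (hp j)) /= => /eqP.
Qed.

Lemma LQ (C : numClosedFieldType) D (rho rho1 rho2 Y : 'M[C]_D) (u : C) (z : 'I_6 -> C) :
  Lfun rho rho1 rho2 Y u z = - (\sum_i bvec C i * z i) + @Qf C D rho (Amat rho rho1 rho2 z) u Y.
Proof. by rewrite /Lfun /Qf !addrA. Qed.

Theorem lemma5 (C : numClosedFieldType) (D : nat)
  (rho rho1 rho2 : 'M[C]_D) (p : 'I_D -> C) (e : 'I_D -> 'cV[C]_D)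
  (u : C) (z : 'I_6 -> C) :
  full_rank_density rho p e ->
  is_hermitian rho1 -> is_hermitian rho2 ->
  0 <= u <= 1 ->
  (forall i, z i \is Num.real) ->
  (forall Y : 'M[C]_D,
     Lfun rho rho1 rho2 (Ystar rho rho1 rho2 p e u z) u z
       <= Lfun rho rho1 rho2 Y u z) /\
  (forall Y : 'M[C]_D,
     (forall Y' : 'M[C]_D, Lfun rho rho1 rho2 Y u z <= Lfun rho rho1 rho2 Y' u z) ->
     Y = Ystar rho rho1 rho2 p e u z).
Proof.
case=> hp _ on erho _ _ /andP[u0 u1] _.
set A := Amat rho rho1 rho2 z.
set Ys := Ystar rho rho1 rho2 p e u z.
have u10 : 0 <= 1 - u by rewrite subr_ge0.
have nz : forall j k, u * p k + (1 - u) * p j != 0.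
  move=> j k; apply: lt0r_neq0.
  have [->|un0] := eqVneq u 0; first by rewrite mul0r add0r subr0 mul1r hp.
  apply: ltr_wpDr; first by rewrite mulr_ge0 // ltW.
  by rewrite mulr_gt0 // lt0r un0.
have K : u *: (Ys *m rho) + (1 - u) *: (rho *m Ys) = - adjmx A.
  exact: keyK on erho nz.
have hr : adjmx rho = rho.
  rewrite erho adjmx_sum; apply: eq_bigr => j _.
  by rewrite adjmxZ /ketbra adjmxM adjmxK geC0_conj // ltW.
have hu : u^* = u by exact: geC0_conj.
pose q (H : 'M[C]_D) := u * \tr (H *m rho *m adjmx H) + (1 - u) * \tr (adjmx H *m rho *m H).
have LY : forall Y, Lfun rho rho1 rho2 Y u z = Lfun rho rho1 rho2 Ys u z + q (Y - Ys).
  move=> Y; have E : Y = Ys + (Y - Ys) by rewrite addrC subrK.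
  by rewrite {1}E !LQ -/A Qexp // addrA.
have sp : forall (x : 'I_D -> 'cV[C]_D), 0 <= \sum_j p j * nv (x j).
  by move=> x; apply: sumr_ge0 => j _; apply: mulr_ge0; [exact: ltW | exact: nv_ge0].
have q0 : forall H, 0 <= q H.
  move=> H; rewrite /q erho (trQ p e H) -{3}(adjmxK H) (trQ p e (adjmx H)).
  by apply: addr_ge0; apply: mulr_ge0.
split=> [Y|Y hmin]; first by rewrite (LY Y) lerDl q0.
have hq : q (Y - Ys) = 0.
  apply/eqP; rewrite eq_le q0 andbT.
  by rewrite -(lerD2l (Lfun rho rho1 rho2 Ys u z)) addr0 -(LY Y) hmin.
apply/eqP; rewrite -subr_eq0; apply/eqP.
move: hq; set H := Y - Ys; rewrite /q erho (trQ p e H) -{3}(adjmxK H) (trQ p e (adjmx H)).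
move/eqP; rewrite paddr_eq0; last 2 first.
- exact: mulr_ge0.
- exact: mulr_ge0.
rewrite !mulf_eq0 => /andP[h1 h2].
have [u0'|un0] := eqVneq u 0.
  move: h2; rewrite u0' subr0 oner_eq0 /= => /eqP h2.
  have := sum_kill hp h2 => hk.
  by rewrite -(adjmxK H) (kill on hk) adjmx0.
move: h1; rewrite (negbTE un0) /= => /eqP h1.
exact: (kill on (sum_kill hp h1)).
Qed.
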